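(* Fix $n\ge1$, a sample $x_1,\dots,x_n\in\mathbb{X}$ and $\epsilon\in(0,1]$, and suppose $\Gamma_\epsilon$ is nonempty and $\Gamma_\epsilon\subset A_\mu$ (so $\mu(\Gamma_\epsilon)>0$). Let $\mu_\epsilon=\mu(\cdot\mid\Gamma_\epsilon)$. Then $$D(\mu_\epsilon\|\hat\mu_{n,\epsilon})\le\frac{2\log(e/\epsilon)}{\mu(\Gamma_\epsilon)}\,V(\mu/\sigma_\epsilon,\hat\mu_n/\sigma_\epsilon).$$
   Context: $\mathbb{X}$ is a countably infinite set, $\mu$ a probability on $\mathbb{X}$ with pmf $f_\mu(x)=\mu(\{x\})$ and support $A_\mu=\{x:f_\mu(x)>0\}$. $\log$ is the logarithm to a fixed base $b>1$. I-divergence: $D(\mu\|\nu)=\sum_{x\in A_\mu}f_\mu(x)\log\frac{f_\mu(x)}{f_\nu(x)}$ if $\mu\ll\nu$, $+\infty$ otherwise. For the sample $x_1,\dots,x_n$, $\hat\mu_n(A)=\frac1n\sum_{k}\mathbb{1}_A(x_k)$; $\Gamma_\epsilon=\{x:\hat\mu_n(\{x\})\ge\epsilon\}$; $\hat\mu_{n,\epsilon}=\hat\mu_n(\cdot\mid\Gamma_\epsilon)$. $\sigma_\epsilon$ is the (finite) $\sigma$-field generated by the partition $\Pi_\epsilon=\{\{x\}:x\in\Gamma_\epsilon\}\cup\{\mathbb{X}\setminus\Gamma_\epsilon\}$, and $V(\mu/\sigma_\epsilon,\hat\mu_n/\sigma_\epsilon)=\sup_{A\in\sigma_\epsilon}|\mu(A)-\hat\mu_n(A)|$.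 *)

(* Defs.v *)
From Stdlib Require Import Reals Lra List Classical ClassicalEpsilon.
Import ListNotations.
Open Scope R_scope.

(* The countably infinite set X is taken to be nat. *)
Definition X := nat.

Definition logb (b x : R) : R := ln x / ln b.

(* Value of a convergent series (sum_{k>=0} g k), chosen by epsilon;
   equals the unique l with infinite_sum g l when the series converges. *)
Definition series (g : nat -> R) : R :=
  epsilon (inhabits 0) (fun l => infinite_sum g l).

(* Probability measure mu with pmf f: mu(A) = sum_{x in A} f x.
   Subsets of X are represented as boolean predicates. *)
Definition mu (f : X -> R) (A : X -> bool) : R :=
  series (fun x => if A x then f x else 0).

Definition is_pmf (f : X -> R) : Prop :=
  (forall x, 0 <= f x) /\ infinite_sum f 1.

(* Empirical measure of the sample xs (n = length xs). *)
Definition emp (xs : list X) (A : X -> bool) : R :=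
  INR (length (filter A xs)) / INR (length xs).

Definition emp_pt (xs : list X) (x : X) : R :=
  emp xs (fun y => Nat.eqb y x).

Definition Gam (xs : list X) (eps : R) (x : X) : bool :=
  if Rle_dec eps (emp_pt xs x) then true else false.

Definition cond_pmf (nu : (X -> bool) -> R) (f : X -> R) (G : X -> bool) (x : X) : R :=
  if G x then f x / nu G else 0.

Inductive ER := Fin (r : R) | PInf.
Definition ER_le (a b : ER) : Prop :=
  match a, b with
  | Fin a, Fin b => a <= b
  | _, PInf => True
  | PInf, Fin _ => False
  end.

Definition Idiv (b : R) (p q : X -> R) : ER :=
  if excluded_middle_informative (forall x, 0 < p x -> 0 < q x)
  then Fin (series (fun x => if Rlt_dec 0 (p x)
                             then p x * logb b (p x / q x) else 0))
  else PInf.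

(* sigma_eps: sigma-field generated by the partition
   { {x} : x in Gamma_eps } U { X \ Gamma_eps }, i.e. the unions of blocks,
   i.e. the sets constant on the block X \ Gamma_eps. *)
Definition in_sigma (G : X -> bool) (A : X -> bool) : Prop :=
  forall x y, G x = false -> G y = false -> A x = A y.

Definition Vdist (G : X -> bool) (m1 m2 : (X -> bool) -> R) : R :=
  epsilon (inhabits 0)
    (is_lub (fun r => exists A, in_sigma G A /\ r = Rabs (m1 A - m2 A))).

(* Main.v *)
Require Import Defs.
From Stdlib Require Import Reals List.
From Stdlib Require Import Lra Lia ClassicalEpsilon Classical FunctionalExtensionality Arith.
Import ListNotations.
Open Scope R_scope.

Fixpoint lsum (h : nat -> R) (l : list nat) : R :=
  match l with [] => 0 | a :: l' => h a + lsum h l' end.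

Lemma lsum_ext h1 h2 l : (forall x, In x l -> h1 x = h2 x) -> lsum h1 l = lsum h2 l.
Proof. induction l; simpl; intros H; auto. rewrite H, IHl; auto. Qed.

Lemma lsum_plus h1 h2 l : lsum (fun x => h1 x + h2 x) l = lsum h1 l + lsum h2 l.
Proof. induction l; simpl; [lra|]. rewrite IHl. lra. Qed.

Lemma lsum_minus h1 h2 l : lsum (fun x => h1 x - h2 x) l = lsum h1 l - lsum h2 l.
Proof. induction l; simpl; [lra|]. rewrite IHl. lra. Qed.

Lemma lsum_div h c l : lsum (fun x => h x / c) l = lsum h l / c.
Proof. induction l; simpl. unfold Rdiv; ring. rewrite IHl. unfold Rdiv; ring. Qed.

Lemma lsum_scal c h l : lsum (fun x => c * h x) l = c * lsum h l.
Proof. induction l; simpl. ring. rewrite IHl. ring. Qed.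

Lemma lsum_le h1 h2 l : (forall x, In x l -> h1 x <= h2 x) -> lsum h1 l <= lsum h2 l.
Proof. induction l; simpl; intros H; [lra|]. pose proof (H a (or_introl eq_refl)).
  assert (lsum h1 l <= lsum h2 l) by (apply IHl; auto). lra. Qed.

Lemma lsum_zero l : lsum (fun _ => 0) l = 0.
Proof. induction l; simpl; auto. rewrite IHl; lra. Qed.

Lemma lsum_nonneg h l : (forall x, In x l -> 0 <= h x) -> 0 <= lsum h l.
Proof. intros H. rewrite <- (lsum_zero l). apply lsum_le. auto. Qed.

Lemma lsum_term h l x : (forall x, In x l -> 0 <= h x) -> In x l -> h x <= lsum h l.
Proof. induction l; simpl; intros H Hx; [contradiction|].
  destruct Hx as [<-|Hx].
  - assert (0 <= lsum h l) by (apply lsum_nonneg; auto). lra.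
  - assert (h x <= lsum h l) by (apply IHl; auto). specialize (H a (or_introl eq_refl)). lra.
Qed.

Lemma lsum_delta_nin l y c : ~ In y l -> lsum (fun x => if Nat.eqb y x then c else 0) l = 0.
Proof. induction l; simpl; intros H; auto. destruct (Nat.eqb_spec y a). exfalso; auto.
  rewrite IHl; auto. lra. Qed.

Lemma lsum_delta_in l y c : NoDup l -> In y l -> lsum (fun x => if Nat.eqb y x then c else 0) l = c.
Proof. induction 1 as [|a l Hna Hnd IH]; simpl; intros Hy; [contradiction|].
  destruct (Nat.eqb_spec y a).
  - subst. rewrite lsum_delta_nin; auto. lra.
  - destruct Hy as [Hy|Hy]; [congruence|]. rewrite IH; auto. lra.
Qed.

Lemma isum_delta (a : nat) (c : R) : infinite_sum (fun x => if Nat.eqb x a then c else 0) c.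
Proof.
  assert (H : forall n, sum_f_R0 (fun x => if Nat.eqb x a then c else 0) n = if Nat.leb a n then c else 0).
  { induction n.
    - simpl. destruct a; simpl; auto.
    - rewrite tech5, IHn. destruct (Nat.leb_spec a n); destruct (Nat.eqb_spec (S n) a);
        destruct (Nat.leb_spec a (S n)); try lia; lra. }
  intros e He. exists a. intros n Hn. rewrite H.
  destruct (Nat.leb_spec a n); try lia. unfold Rdist. replace (c - c) with 0 by ring.
  rewrite Rabs_R0. lra.
Qed.

Lemma isum_ext g1 g2 l : (forall x, g1 x = g2 x) -> infinite_sum g1 l -> infinite_sum g2 l.
Proof. intros H. replace g2 with g1; auto. apply functional_extensionality; auto. Qed.

Lemma isum_plus g1 g2 l1 l2 : infinite_sum g1 l1 -> infinite_sum g2 l2 ->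
  infinite_sum (fun x => g1 x + g2 x) (l1 + l2).
Proof. intros H1 H2. pose proof (CV_plus _ _ _ _ H1 H2) as H.
  intros e He. destruct (H e He) as [N HN]. exists N. intros n Hn.
  rewrite plus_sum. apply HN; auto. Qed.

Lemma isum_minus g1 g2 l1 l2 : infinite_sum g1 l1 -> infinite_sum g2 l2 ->
  infinite_sum (fun x => g1 x - g2 x) (l1 - l2).
Proof. intros H1 H2. pose proof (CV_minus _ _ _ _ H1 H2) as H.
  intros e He. destruct (H e He) as [N HN]. exists N. intros n Hn.
  rewrite minus_sum. apply HN; auto. Qed.

Lemma isum_fin l : NoDup l -> forall g, (forall x, ~ In x l -> g x = 0) -> infinite_sum g (lsum g l).
Proof.
  induction 1 as [|a l Hna Hnd IH]; intros g Hg; simpl.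
  - apply isum_ext with (fun x => if Nat.eqb x 0 then 0 else 0).
    { intros x. rewrite Hg; auto. destruct (Nat.eqb x 0); auto. }
    apply isum_delta.
  - set (g2 := fun x => if Nat.eqb x a then 0 else g x).
    apply isum_ext with (fun x => (if Nat.eqb x a then g a else 0) + g2 x).
    { intro x. unfold g2. destruct (Nat.eqb_spec x a); subst; lra. }
    replace (lsum g l) with (lsum g2 l).
    + apply isum_plus. apply isum_delta. apply IH. intros x Hx. unfold g2.
      destruct (Nat.eqb_spec x a). auto. apply Hg. simpl. intuition.
    + apply lsum_ext. intros x Hx. unfold g2. destruct (Nat.eqb_spec x a); subst; [contradiction|reflexivity].
Qed.

Lemma series_eq g l : infinite_sum g l -> series g = l.
Proof. intro H. unfold series. apply uniqueness_sum with g; [|exact H].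
  apply epsilon_spec. exists l; exact H. Qed.

Definition cnt (xs : list X) (x : X) : R := INR (length (filter (fun y => Nat.eqb y x) xs)).

Lemma cnt_add (xs : list X) (A : X -> bool) (G : list nat) : NoDup G -> (forall x, In x xs -> A x = true -> In x G) ->
  INR (length (filter A xs)) = lsum (fun x => if A x then cnt xs x else 0) G.
Proof.
  intro HG. induction xs as [|y xs IH]; intros HA.
  - simpl. unfold cnt. transitivity (lsum (fun _ => 0) G); [symmetry; apply lsum_zero|].
    apply lsum_ext; intros x _; destruct (A x); auto.
  - transitivity (INR (length (filter A xs)) + (if A y then 1 else 0)).
    { replace (filter A (y::xs)) with (if A y then y :: filter A xs else filter A xs) by reflexivity.
      destruct (A y); [cbn [length]; rewrite S_INR|]; lra. }
    rewrite IH by (intros; apply HA; simpl; auto).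
    transitivity (lsum (fun x => if A x then cnt xs x else 0) G +
                  lsum (fun x => if Nat.eqb y x then (if A y then 1 else 0) else 0) G).
    { f_equal. destruct (A y) eqn:Ay.
      - rewrite lsum_delta_in; auto. apply HA; simpl; auto.
      - transitivity (lsum (fun _ => 0) G); [symmetry; apply lsum_zero|].
        apply lsum_ext. intros. destruct (Nat.eqb y x); auto. }
    rewrite <- lsum_plus. apply lsum_ext. intros x _. unfold cnt.
    replace (filter (fun y0 => Nat.eqb y0 x) (y::xs)) with
      (if Nat.eqb y x then y :: filter (fun y0 => Nat.eqb y0 x) xs else filter (fun y0 => Nat.eqb y0 x) xs) by reflexivity.
    destruct (Nat.eqb_spec y x).
    + subst. destruct (A x); cbn [length]; [rewrite S_INR|]; lra.
    + destruct (A x); lra.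
Qed.

Lemma Rdiv_le0' a c : 0 <= a -> 0 < c -> 0 <= a / c.
Proof. intros. unfold Rdiv. apply Rmult_le_pos; auto. left; apply Rinv_0_lt_compat; auto. Qed.

Definition pos (a : R) : R := if Rle_dec a 0 then 0 else a.

Lemma pos_cases a : (pos a = 0 /\ a <= 0) \/ (pos a = a /\ 0 < a).
Proof. unfold pos. destruct (Rle_dec a 0); [left|right]; split; auto; lra. Qed.

Lemma pos_mono a a' : a <= a' -> pos a <= pos a'.
Proof. intros. destruct (pos_cases a) as [[-> ?]|[-> ?]]; destruct (pos_cases a') as [[-> ?]|[-> ?]]; lra. Qed.

Lemma pos_div a m : 0 < m -> pos (a / m) = pos a / m.
Proof. intros Hm. assert (E : a / m * m = a) by (field; lra).
  assert (0 < / m) by (apply Rinv_0_lt_compat; auto).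
  destruct (pos_cases a) as [[-> ?]|[-> ?]]; destruct (pos_cases (a/m)) as [[-> ?]|[-> ?]];
  unfold Rdiv in *; nra.
Qed.

Lemma ln_le' x y : 0 < x -> x <= y -> ln x <= ln y.
Proof. intros Hx Hxy. destruct (Rle_lt_or_eq_dec x y Hxy). left; apply ln_increasing; auto.
  subst; lra. Qed.

Lemma ln_le_xm1 x : 0 < x -> ln x <= x - 1.
Proof. intros Hx. pose proof (exp_ineq1_le (x - 1)). rewrite <- (ln_exp (x - 1)).
  apply ln_le'; auto. lra. Qed.

Lemma pointwise P Q eps : 0 < P -> P <= 1 -> 0 < eps -> eps <= Q ->
  P * ln (P / Q) <= (P - Q) + pos (Q - P) + (- ln eps) * pos (P - Q).
Proof.
  intros HP HP1 He HQ.
  set (r := P / Q).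
  assert (Hr : 0 < r) by (unfold r; apply Rdiv_lt_0_compat; lra).
  assert (Hqr : Q * r = P) by (unfold r; field; lra).
  pose proof (ln_le_xm1 r Hr) as H1.
  assert (H2 : ln r <= - ln eps).
  { rewrite <- ln_Rinv by auto. apply ln_le'; auto.
    unfold r. apply Rmult_le_reg_r with Q; [lra|]. unfold Rdiv.
    rewrite Rmult_assoc, Rinv_l by lra. 
    apply Rle_trans with 1; [lra|]. apply Rmult_le_reg_l with eps; auto.
    rewrite <- Rmult_assoc, Rinv_r by lra. lra. }
  destruct (pos_cases (Q - P)) as [[-> ?]|[-> ?]]; destruct (pos_cases (P - Q)) as [[-> ?]|[-> ?]]; try lra.
  - assert (r <= 1) by nra. assert (P * ln r <= 0) by nra. lra.
  - assert (Q * ln r <= Q * (r - 1)) by (apply Rmult_le_compat_l; lra).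
    assert ((P - Q) * ln r <= (P - Q) * (- ln eps)) by (apply Rmult_le_compat_l; lra).
    assert (P * ln r = Q * ln r + (P - Q) * ln r) by ring. nra.
  - assert (r <= 1) by nra. assert (P * ln r <= 0) by nra. lra.
Qed.

Theorem mainTheorem11
  (b : R) (hb : 1 < b)
  (f : X -> R) (hf : is_pmf f)
  (xs : list X) (hn : (1 <= length xs)%nat)
  (eps : R) (heps0 : 0 < eps) (heps1 : eps <= 1)
  (hne : exists x, Gam xs eps x = true)
  (hsub : forall x, Gam xs eps x = true -> 0 < f x) :
  ER_le
    (Idiv b (cond_pmf (mu f) f (Gam xs eps))
            (cond_pmf (emp xs) (emp_pt xs) (Gam xs eps)))
    (Fin (2 * logb b (exp 1 / eps) / mu f (Gam xs eps)
          * Vdist (Gam xs eps) (mu f) (emp xs))).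
Proof.
  destruct hf as [hf0 hf1].
  set (Gm := Gam xs eps) in *.
  set (Gl := filter Gm (nodup Nat.eq_dec xs)).
  assert (HnR : 0 < INR (length xs)) by (apply lt_0_INR; lia).
  assert (HGnd : NoDup Gl) by (apply NoDup_filter, NoDup_nodup).
  assert (Hcnt0 : forall x, 0 <= cnt xs x) by (intros; apply pos_INR).
  assert (He0 : forall x, 0 <= emp_pt xs x).
  { intros x. change (0 <= cnt xs x / INR (length xs)). apply Rdiv_le0'; auto. }
  assert (HeG : forall x, Gm x = true -> eps <= emp_pt xs x).
  { intros x Hx. unfold Gm, Gam in Hx. destruct (Rle_dec eps (emp_pt xs x)); auto; discriminate. }
  assert (HGin : forall x, Gm x = true -> In x Gl).
  { intros x Hx. unfold Gl. apply filter_In. split; [|exact Hx]. apply nodup_In.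
    pose proof (HeG x Hx) as H.
    destruct (filter (fun y => Nat.eqb y x) xs) as [|z l] eqn:E.
    - exfalso. change (eps <= cnt xs x / INR (length xs)) in H. unfold cnt in H. rewrite E in H. simpl in H. unfold Rdiv in H.
      rewrite Rmult_0_l in H. lra.
    - assert (Hz : In z (filter (fun y => Nat.eqb y x) xs)) by (rewrite E; left; auto).
      apply filter_In in Hz. destruct Hz as [H1 H2]. apply Nat.eqb_eq in H2. subst. auto. }
  assert (HinG : forall x, In x Gl -> Gm x = true).
  { intros x Hx. unfold Gl in Hx. apply filter_In in Hx. tauto. }
  assert (emp_add : forall A, (forall x, A x = true -> Gm x = true) ->
            emp xs A = lsum (fun x => if A x then emp_pt xs x else 0) Gl).
  { intros A HA. unfold emp. rewrite (cnt_add xs A Gl HGnd).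
    2:{ intros x _ Hx. apply HGin, HA, Hx. }
    rewrite <- lsum_div. apply lsum_ext. intros x _. destruct (A x); [reflexivity|].
    unfold Rdiv; ring. }
  assert (emp_b : forall A, 0 <= emp xs A <= 1).
  { intros A. unfold emp. split. apply Rdiv_le0'; auto. apply pos_INR.
    apply Rmult_le_reg_r with (INR (length xs)); auto. unfold Rdiv.
    rewrite Rmult_assoc, Rinv_l by lra. rewrite Rmult_1_l, Rmult_1_r. apply le_INR.
    apply filter_length_le. }
  assert (mu_fin : forall A, (forall x, A x = true -> Gm x = true) ->
            mu f A = lsum (fun x => if A x then f x else 0) Gl).
  { intros A HA. unfold mu. apply series_eq. apply isum_fin; auto.
    intros x Hx. destruct (A x) eqn:Ax; auto. exfalso. apply Hx, HGin, HA, Ax. }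
  set (m := lsum f Gl).
  set (k := lsum (emp_pt xs) Gl).
  assert (Hm : mu f Gm = m).
  { rewrite mu_fin by auto. apply lsum_ext. intros x Hx. rewrite HinG; auto. }
  assert (Hk : emp xs Gm = k).
  { rewrite emp_add by auto. apply lsum_ext. intros x Hx. rewrite HinG; auto. }
  destruct hne as [x0 Hx0].
  assert (Hm0 : 0 < m).
  { pose proof (hsub x0 Hx0). assert (f x0 <= m) by (apply lsum_term; auto). lra. }
  assert (Hfm : forall x, In x Gl -> f x <= m) by (intros; apply lsum_term; auto).
  assert (Hk0 : 0 < k).
  { pose proof (HeG x0 Hx0). assert (emp_pt xs x0 <= k) by (apply lsum_term; auto). lra. }
  assert (Hek : forall x, In x Gl -> emp_pt xs x <= k) by (intros; apply lsum_term; auto).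
  assert (Hk1 : k <= 1) by (rewrite <- Hk; apply emp_b).
  set (V := Vdist Gm (mu f) (emp xs)).
  set (E := fun r => exists A, in_sigma Gm A /\ r = Rabs (mu f A - emp xs A)).
  assert (Hbnd : forall A, in_sigma Gm A -> Rabs (mu f A - emp xs A) <= 2 + m).
  { intros A HA.
    assert (Hmu : -m <= mu f A <= 1 + m).
    { destruct (classic (exists x, Gm x = false /\ A x = true)) as [[y [Hy1 Hy2]]|Hno].
      - assert (HA' : forall x, Gm x = false -> A x = true).
        { intros x Hx. rewrite (HA x y Hx Hy1). exact Hy2. }
        set (r := fun x => if andb (Gm x) (negb (A x)) then f x else 0).
        assert (Hr : infinite_sum r (lsum r Gl)).
        { apply isum_fin; auto. intros x Hx. unfold r.
          destruct (Gm x) eqn:Gx; simpl; auto. exfalso; apply Hx, HGin, Gx. }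
        assert (Hmu : mu f A = 1 - lsum r Gl).
        { unfold mu. apply series_eq. apply isum_ext with (fun x => f x - r x).
          2:{ apply isum_minus; auto. }
          intros x. unfold r. destruct (A x) eqn:Ax; destruct (Gm x) eqn:Gx; simpl; try ring.
          rewrite HA' in Ax; auto; discriminate. }
        assert (0 <= lsum r Gl <= m).
        { split. apply lsum_nonneg. intros x _. unfold r. destruct (andb (Gm x) (negb (A x))); auto; lra.
          apply lsum_le. intros x _. unfold r. destruct (andb (Gm x) (negb (A x))); auto; lra. }
        lra.
      - assert (HA' : forall x, A x = true -> Gm x = true).
        { intros x Hx. destruct (Gm x) eqn:Gx; auto. exfalso. apply Hno. exists x; auto. }
        rewrite mu_fin by auto.
        assert (0 <= lsum (fun x => if A x then f x else 0) Gl <= m).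
        { split. apply lsum_nonneg. intros x _. destruct (A x); auto; lra.
          apply lsum_le. intros x _. destruct (A x); auto; lra. }
        lra. }
    pose proof (emp_b A). apply Rabs_le. lra. }
  assert (HV : is_lub E V).
  { unfold V, Vdist. apply epsilon_spec.
    assert (Hb : bound E).
    { exists (2 + m). intros r [A [HA ->]]. apply Hbnd; auto. }
    assert (Hne : exists r, E r).
    { exists (Rabs (mu f Gm - emp xs Gm)). exists Gm. split; auto. intros x y Hx Hy. congruence. }
    destruct (completeness E Hb Hne) as [v Hv]. exists v; exact Hv. }
  assert (HV1 : forall A, in_sigma Gm A -> Rabs (mu f A - emp xs A) <= V).
  { intros A HA. destruct HV as [Hub _]. apply Hub. exists A; split; auto. }
  assert (HV0 : 0 <= V).
  { apply Rle_trans with (Rabs (mu f Gm - emp xs Gm)). apply Rabs_pos.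
    apply HV1. intros x y Hx Hy. congruence. }
  assert (HVfe : lsum (fun x => pos (f x - emp_pt xs x)) Gl <= V).
  { set (A1 := fun x => andb (Gm x) (if Rlt_dec (emp_pt xs x) (f x) then true else false)).
    assert (HA1 : forall x, A1 x = true -> Gm x = true).
    { intros x Hx. unfold A1 in Hx. apply andb_prop in Hx. tauto. }
    assert (Hs : in_sigma Gm A1).
    { intros x y Hx Hy. unfold A1. rewrite Hx, Hy. reflexivity. }
    pose proof (HV1 A1 Hs) as H.
    rewrite mu_fin, emp_add in H by auto. rewrite <- lsum_minus in H.
    eapply Rle_trans; [|exact H]. eapply Rle_trans; [|apply Rle_abs]. right.
    apply lsum_ext. intros x Hx. unfold A1. rewrite HinG by auto. simpl.
    unfold pos. destruct (Rlt_dec (emp_pt xs x) (f x)); destruct (Rle_dec (f x - emp_pt xs x) 0); lra. }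
  assert (HVef : lsum (fun x => pos (emp_pt xs x - f x)) Gl <= V).
  { set (A1 := fun x => andb (Gm x) (if Rlt_dec (f x) (emp_pt xs x) then true else false)).
    assert (HA1 : forall x, A1 x = true -> Gm x = true).
    { intros x Hx. unfold A1 in Hx. apply andb_prop in Hx. tauto. }
    assert (Hs : in_sigma Gm A1).
    { intros x y Hx Hy. unfold A1. rewrite Hx, Hy. reflexivity. }
    pose proof (HV1 A1 Hs) as H.
    rewrite mu_fin, emp_add in H by auto. rewrite Rabs_minus_sym, <- lsum_minus in H.
    eapply Rle_trans; [|exact H].
    eapply Rle_trans; [|apply Rle_abs]. right.
    apply lsum_ext. intros x Hx. unfold A1. rewrite HinG by auto. simpl.
    unfold pos. destruct (Rlt_dec (f x) (emp_pt xs x)); destruct (Rle_dec (emp_pt xs x - f x) 0); lra. }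
  set (P := fun x => f x / m).
  set (Q := fun x => emp_pt xs x / k).
  assert (HSP : lsum P Gl = 1) by (unfold P; rewrite lsum_div; fold m; field; lra).
  assert (HSQ : lsum Q Gl = 1) by (unfold Q; rewrite lsum_div; fold k; field; lra).
  set (S1 := lsum (fun x => pos (P x - Q x)) Gl).
  set (S2 := lsum (fun x => pos (Q x - P x)) Gl).
  assert (HS12 : S1 = S2).
  { assert (S1 - S2 = lsum P Gl - lsum Q Gl).
    { unfold S1, S2. rewrite <- !lsum_minus. apply lsum_ext. intros x _.
      destruct (pos_cases (P x - Q x)) as [[-> ?]|[-> ?]];
      destruct (pos_cases (Q x - P x)) as [[-> ?]|[-> ?]]; lra. }
    lra. }
  assert (HS : S2 <= V / m).
  { destruct (Rle_lt_dec m k) as [Hmk|Hmk].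
    - unfold S2. eapply Rle_trans with (lsum (fun x => pos (emp_pt xs x - f x)) Gl / m).
      2:{ apply Rmult_le_compat_r; auto. left; apply Rinv_0_lt_compat; auto. }
      rewrite <- lsum_div. apply lsum_le. intros x Hx. rewrite <- pos_div by auto.
      apply pos_mono. unfold P, Q. unfold Rdiv.
      assert (/ k <= / m) by (apply Rinv_le_contravar; auto).
      assert (emp_pt xs x * / k <= emp_pt xs x * / m) by (apply Rmult_le_compat_l; auto).
      lra.
    - rewrite <- HS12. unfold S1. eapply Rle_trans with (lsum (fun x => pos (f x - emp_pt xs x)) Gl / m).
      2:{ apply Rmult_le_compat_r; auto. left; apply Rinv_0_lt_compat; auto. }
      rewrite <- lsum_div. apply lsum_le. intros x Hx. rewrite <- pos_div by auto.
      apply pos_mono. unfold P, Q. unfold Rdiv.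
      assert (/ m <= / k) by (apply Rinv_le_contravar; lra).
      assert (emp_pt xs x * / m <= emp_pt xs x * / k) by (apply Rmult_le_compat_l; auto).
      lra. }
  assert (HL : 0 <= - ln eps).
  { assert (ln eps <= ln 1) by (apply ln_le'; auto). rewrite ln_1 in H. lra. }
  assert (HD : lsum (fun x => P x * ln (P x / Q x)) Gl <= (1 + - ln eps) * (V / m)).
  { eapply Rle_trans with (lsum (fun x => (P x - Q x) + pos (Q x - P x) + (- ln eps) * pos (P x - Q x)) Gl).
    - apply lsum_le. intros x Hx. apply pointwise.
      + unfold P. apply Rdiv_lt_0_compat; auto.
      + unfold P. apply Rmult_le_reg_r with m; auto. unfold Rdiv.
        rewrite Rmult_assoc, Rinv_l by lra. rewrite Rmult_1_r, Rmult_1_l. auto.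
      + auto.
      + unfold Q. pose proof (HeG x (HinG x Hx)). apply Rle_trans with (emp_pt xs x); auto.
        apply Rmult_le_reg_r with k; auto. unfold Rdiv.
        rewrite Rmult_assoc, Rinv_l by lra. pose proof (He0 x). nra.
    - rewrite !lsum_plus, lsum_minus.
      replace (lsum (fun x => - ln eps * pos (P x - Q x)) Gl) with (- ln eps * S1).
      2:{ unfold S1. rewrite lsum_scal. reflexivity. }
      fold S2. rewrite HSP, HSQ, HS12.
      assert (- ln eps * S2 <= - ln eps * (V / m)) by (apply Rmult_le_compat_l; auto). lra. }
  unfold Idiv. destruct (excluded_middle_informative _) as [Hac|Hac].
  2:{ exfalso. apply Hac. intros x Hx. unfold cond_pmf in *. destruct (Gm x) eqn:Gx; [|lra].
      rewrite Hk. apply Rdiv_lt_0_compat; auto. pose proof (HeG x Gx). lra. }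
  simpl.
  rewrite (series_eq _ (lsum (fun x => P x * ln (P x / Q x) / ln b) Gl)).
  2:{ replace (lsum (fun x => P x * ln (P x / Q x) / ln b) Gl) with
        (lsum (fun x => if Rlt_dec 0 (cond_pmf (mu f) f Gm x)
                 then cond_pmf (mu f) f Gm x * logb b (cond_pmf (mu f) f Gm x / cond_pmf (emp xs) (emp_pt xs) Gm x) else 0) Gl).
      - apply isum_fin; auto. intros x Hx. unfold cond_pmf.
        destruct (Gm x) eqn:Gx. exfalso; apply Hx, HGin, Gx.
        destruct (Rlt_dec 0 0); auto; lra.
      - apply lsum_ext. intros x Hx. unfold cond_pmf. rewrite (HinG x Hx), Hm, Hk.
        fold (P x) (Q x). destruct (Rlt_dec 0 (P x)) as [_|Hn].
        + unfold logb, Rdiv. ring.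
        + exfalso. apply Hn. unfold P. apply Rdiv_lt_0_compat; auto. }
  rewrite lsum_div. rewrite Hm. fold V.
  assert (Hlb : 0 < ln b) by (rewrite <- ln_1; apply ln_increasing; lra).
  assert (Hle : ln (exp 1 / eps) = 1 + - ln eps).
  { unfold Rdiv. rewrite ln_mult, ln_exp, ln_Rinv; auto. apply exp_pos. apply Rinv_0_lt_compat; auto. }
  unfold logb. rewrite Hle.
  replace (2 * ((1 + - ln eps) / ln b) / m * V) with (2 * ((1 + - ln eps) * (V / m)) / ln b) by (field; lra).
  unfold Rdiv at 1 2. apply Rmult_le_compat_r. left; apply Rinv_0_lt_compat; auto.
  assert (0 <= (1 + - ln eps) * (V / m)).
  { apply Rmult_le_pos. lra. apply Rdiv_le0'; auto. }
  lra.
Qed.
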